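(* Let $X,Y$ be Banach lattices and let $S\colon X\to Y$ be sublinear and continuous. Then $S$ is Lipschitz: there exists $L>0$ with $\|Sx-Sy\|\le L\|x-y\|$ for all $x,y\in X$.
   Context: An operator $S\colon X\to Y$ is sublinear if it is convex, i.e. $S(\lambda x+(1-\lambda)y)\le\lambda Sx+(1-\lambda)Sy$ for all $x,y$, $\lambda\in[0,1]$, and positive homogeneous, i.e. $S(\lambda x)=\lambda Sx$ for all $\lambda>0$, $x\in X$. *)

(* Defs.v *)
From HB Require Import structures.
From mathcomp Require Import all_boot all_order all_algebra.
From mathcomp Require Import all_classical all_reals all_analysis.
Set Implicit Arguments. Unset Strict Implicit. Unset Printing Implicit Defensive.
Import Order.TTheory GRing.Theory Num.Theory.
Import numFieldNormedType.Exports.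
Local Open Scope ring_scope.

(* A (real) Banach lattice structure on a Banach space X:
   a partial order [le] compatible with the vector space operations,
   a binary supremum [join] (so that (X, le) is a lattice, i.e. a Riesz space;
   infima then exist as  x /\ y = -((-x) \/ (-y))),
   and the lattice norm axiom  |x| <= |y| -> ||x|| <= ||y||  with |x| = x \/ -x. *)
Record banach_lattice (R : realType) (X : completeNormedModType R) := BanachLattice {
  bl_le : X -> X -> Prop;
  bl_join : X -> X -> X;
  bl_refl : forall x, bl_le x x;
  bl_antisym : forall x y, bl_le x y -> bl_le y x -> x = y;
  bl_trans : forall x y z, bl_le x y -> bl_le y z -> bl_le x z;
  bl_add : forall x y z, bl_le x y -> bl_le (x + z) (y + z);
  bl_scale : forall (a : R) x y, 0 <= a -> bl_le x y -> bl_le (a *: x) (a *: y);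
  bl_join_ubl : forall x y, bl_le x (bl_join x y);
  bl_join_ubr : forall x y, bl_le y (bl_join x y);
  bl_join_lub : forall x y z, bl_le x z -> bl_le y z -> bl_le (bl_join x y) z;
  bl_norm_mono : forall x y,
    bl_le (bl_join x (- x)) (bl_join y (- y)) -> `|x| <= `|y|
}.

Definition sublinear (R : realType) (X Y : completeNormedModType R)
    (LY : banach_lattice Y) (S : X -> Y) : Prop :=
  (forall (x y : X) (l : R), 0 <= l <= 1 ->
     bl_le LY (S (l *: x + (1 - l) *: y)) (l *: S x + (1 - l) *: S y)) /\
  (forall (l : R) (x : X), 0 < l -> S (l *: x) = l *: S x).

(* Main.v *)
Require Import Defs.
From HB Require Import structures.
From mathcomp Require Import all_boot all_order all_algebra.
From mathcomp Require Import all_classical all_reals all_analysis.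
From mathcomp Require Import ring lra.
Import Order.TTheory GRing.Theory Num.Theory.
Import numFieldNormedType.Exports.
Local Open Scope ring_scope.

Section Lat.
Variables (R : realType) (Y : completeNormedModType R) (LY : banach_lattice Y).
Local Notation le := (bl_le LY).
Local Notation ab x := (bl_join LY x (- x)).

Lemma le_addlr (a b c d : Y) : le a b -> le c d -> le (a + c) (b + d).
Proof.
move=> h1 h2; apply: (bl_trans (y := b + c)); first exact: bl_add.
by rewrite (addrC b c) (addrC b d); apply: bl_add.
Qed.

Arguments le_addlr {a b c d}.
Lemma le_opp (a b : Y) : le a b -> le (- b) (- a).
Proof.
move=> h; have := bl_add (- a - b) h.
by rewrite addrA subrr add0r addrC -addrA addNr addr0.
Qed.

Arguments le_opp {a b}.
Lemma ab_ge0 (x : Y) : le 0 (ab x).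
Proof.
have h := le_addlr (bl_join_ubl LY x (- x)) (bl_join_ubr LY x (- x)).
rewrite subrr in h.
have := bl_scale (a := 2^-1) (ltW _) h.
rewrite scalerDr.
rewrite scaler0 -scalerDl.
have -> : (2^-1 + 2^-1 : R) = 1 by field.
rewrite scale1r; apply; rewrite invr_gt0; lra.
Qed.

Lemma ab_pos (w : Y) : le 0 w -> ab w = w.
Proof.
move=> h; apply: bl_antisym; last exact: bl_join_ubl.
apply: bl_join_lub; first exact: bl_refl.
have h2 := le_opp h; rewrite oppr0 in h2; exact: bl_trans h2 h.
Qed.

Arguments ab_pos {w}.
Lemma key (z a b : Y) : le z a -> le (- z) b -> `|z| <= `|a| + `|b|.
Proof.
move=> hza hzb.
have ha := ab_ge0 a; have hb := ab_ge0 b.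
have hw : le 0 (ab a + ab b) by rewrite -(addr0 0); exact: le_addlr.
have h1 : le (ab z) (ab (ab a + ab b)).
  rewrite (ab_pos hw); apply: bl_join_lub.
  - apply: (bl_trans hza); apply: (bl_trans (bl_join_ubl LY a (- a))).
    rewrite -{1}(addr0 (ab a)); apply: le_addlr => //; exact: bl_refl.
  - apply: (bl_trans hzb); apply: (bl_trans (bl_join_ubl LY b (- b))).
    rewrite -{1}(add0r (ab b)); apply: le_addlr => //; exact: bl_refl.
have := bl_norm_mono h1 => h2.
have na : `|ab a| <= `|a| by apply: (bl_norm_mono (b:=LY)); rewrite (ab_pos ha); exact: bl_refl.
have nb : `|ab b| <= `|b| by apply: (bl_norm_mono (b:=LY)); rewrite (ab_pos hb); exact: bl_refl.
apply: (le_trans h2); apply: (le_trans (ler_normD _ _)); exact: lerD.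
Qed.
End Lat.
Arguments key {R Y LY z a b}.

Theorem lemmaA7 (R : realType) (X Y : completeNormedModType R)
    (LX : banach_lattice X) (LY : banach_lattice Y) (S : X -> Y) :
  sublinear LY S -> continuous S ->
  exists L : R, 0 < L /\ forall x y : X, `|S x - S y| <= L * `|x - y|.
Proof.
move=> [Hcv Hh] HS.
have Hadd : forall x y, bl_le LY (S (x + y)) (S x + S y).
  move=> x y.
  have := Hcv (2%:R *: x) (2%:R *: y) (2^-1) _.
  rewrite !Hh ?ltr0n // !scalerA.
  have -> : (1 - 2^-1 : R) = 2^-1 by field.
  rewrite mulVf ?pnatr_eq0 // !scale1r; apply.
  apply/andP; split; rewrite ?invr_ge0 ?ler0n //.
  rewrite invf_le1 ?ltr0n //; lra.
have S0 : S 0 = 0.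
  have h := Hh 2%:R 0 (ltr0n _ 2); rewrite scaler0 scaler_nat mulr2n in h.
  by rewrite -(subrr (S 0)) {2}h addrK.
have /cvgrPdist_le /(_ 1 ltr01) := HS 0.
move=> /nbhs_norm0P [d /= d0 Hd].
have Hb : forall u, `|S u| <= 2 / d * `|u|.
  move=> u; have [->|u0] := eqVneq u 0.
    by rewrite S0 !normr0 mulr0.
  have nu : 0 < `|u| by rewrite normr_gt0.
  set c := d / (2 * `|u|).
  have c0 : 0 < c by rewrite /c divr_gt0 // mulr_gt0.
  have := Hd (c *: u) => /=; rewrite S0 sub0r normrN Hh // normrZ gtr0_norm //.
  have -> : c * `|u| = d / 2 by rewrite /c; field; rewrite gt_eqF.
  have hd2 : d / 2 < d by lra.
  move=> /(_ hd2) h.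
  have -> : 2 / d * `|u| = c^-1 by rewrite /c invf_div; field; rewrite gt_eqF.
  by rewrite normrZ gtr0_norm // -ler_pdivlMl // mulr1 in h.
exists (2 * (2 / d)); split; first by rewrite mulr_gt0 // divr_gt0.
move=> x y.
have h1 : bl_le LY (S x - S y) (S (x - y)).
  have := bl_add (- S y) (Hadd y (x - y)).
  have -> : y + (x - y) = x by rewrite addrC subrK.
  by rewrite (addrC (S y + _)) addKr.
have h2 : bl_le LY (- (S x - S y)) (S (y - x)).
  have := bl_add (- S x) (Hadd x (y - x)).
  have -> : x + (y - x) = y by rewrite addrC subrK.
  by rewrite opprB (addrC (S x + _)) addKr.
apply: (le_trans (key h1 h2)).
apply: (le_trans (lerD (Hb _) (Hb _))); rewrite (distrC y x).
rewrite -mulrDl -mulr2n -mulr_natl; lra.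
Qed.
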